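(* Let $L,T$ be finite distributive lattices and $p:L\to T$ a map such that (i) $p|_{\mathcal{J}(L)}$ is a quotient map, (ii) $p(\mathcal{J}(L))=\mathcal{J}(T)$, and (iii) $p$ is a join-preserving quotient map of posets. Let $p_0=p|_{\mathcal{J}(L)}:\mathcal{J}(L)\to\mathcal{J}(T)$. Then $\mathbf{B}_T\circ p=\hat{p_0}\circ\mathbf{B}_L$, where $\mathbf{B}_L:L\to\mathcal{O}(\mathcal{J}(L))$, $\mathbf{B}_L(a)=\{x\in\mathcal{J}(L):x\le a\}$ and $\mathbf{B}_T$ analogously are the Birkhoff isomorphisms; in particular $p$ is isomorphic to the induced map $\hat{p_0}$.
   Context: $\mathcal{J}(L)$ is the set of join-irreducible elements of $L$ (elements $x\ne0$ such that $x=a\vee b$ implies $x=a$ or $x=b$), with the order inherited from $L$. A quotient map between posets is a surjective order-preserving map $\phi:A\to B$ such that for all $a\le b$ in $B$ there are $x\le y$ in $A$ with $\phi(x)=a,\phi(y)=b$. $\mathcal{O}(Q)$ denotes the down-sets of a poset $Q$ under inclusion, $\downarrow x=\{m:m\le x\}$; for a quotient map $p_0:Q\to R$ of finite posets, $\hat{p_0}(\emptyset)=\emptyset$ and $\hat{p_0}(A)=\bigcup_i\downarrow p_0(a_i)$ over the maximal elements $a_i$ of $A$. Two maps $f:A\to B$, $f':A'\to B'$ are isomorphic if there are isomorphisms $g_1:A\to A'$, $g_2:B\to B'$ with $g_2\circ f=f'\circ g_1$. *)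

(* Defs.v *)
From HB Require Import structures.
From mathcomp Require Import all_boot all_order.
Set Implicit Arguments. Unset Strict Implicit. Unset Printing Implicit Defensive.
Import Order.Theory.
Local Open Scope order_scope.

Section Defs.
Context {d : Order.disp_t} {L : finTBDistrLatticeType d}.

Definition join_irr (x : L) : bool :=
  (x != \bot) && [forall a : L, forall b : L, (x == a `|` b) ==> ((x == a) || (x == b))].

Definition JI : {set L} := [set x | join_irr x].

Definition birkhoff (a : L) : {set L} := [set x in JI | x <= a].

Definition maximal_in (A : {set L}) (a : L) : bool :=
  (a \in A) && [forall b in A, ~~ (a < b)].
End Defs.

Arguments JI {d} L.

Section Maps.
Context {dA dB : Order.disp_t} {A : finTBDistrLatticeType dA} {B : finTBDistrLatticeType dB}.

Definition quotient_map_on (X : {set A}) (Y : {set B}) (f : A -> B) : Prop :=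
  [/\ (forall x, x \in X -> f x \in Y),
      (forall y, y \in Y -> exists2 x, x \in X & f x = y),
      (forall x y, x \in X -> y \in X -> x <= y -> f x <= f y) &
      (forall a b, a \in Y -> b \in Y -> a <= b ->
         exists x y, [/\ x \in X, y \in X, x <= y, f x = a & f y = b])].

Definition join_preserving (f : A -> B) : Prop :=
  forall a b, f (a `|` b) = f a `|` f b.

(* hat p0 (S) = union of the down-sets (in J(B)) of p0(s) over maximal s in S;
   hat p0 (emptyset) = emptyset automatically *)
Definition hat_map (p0 : A -> B) (S : {set A}) : {set B} :=
  [set y in JI B | [exists s, maximal_in S s && (y <= p0 s)]].
End Maps.

(* Main.v *)
Require Import Defs.
From HB Require Import structures.
From mathcomp Require Import all_boot all_order.
Import Order.Theory.
Local Open Scope order_scope.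

Lemma ji_prime (d : Order.disp_t) (T : finTBDistrLatticeType d) (y u v : T) :
  join_irr y -> y <= u `|` v -> (y <= u) || (y <= v).
Proof.
move=> /andP[_ /forallP H] yle.
have e : y = y `&` u `|` y `&` v by rewrite -meetUr; apply/esym/meet_l.
have := forallP (H (y `&` u)) (y `&` v).
rewrite -e eqxx /= => /orP[/eqP h|/eqP h].
  by apply/orP; left; rewrite h leIr.
by apply/orP; right; rewrite h leIr.
Qed.

Lemma mono_of_join (dA dB : Order.disp_t) (A : finTBDistrLatticeType dA)
  (B : finTBDistrLatticeType dB) (p : A -> B) :
  join_preserving p -> forall x y, x <= y -> p x <= p y.
Proof. by move=> jp x y xy; rewrite -(join_r xy) jp leUl. Qed.

Lemma card_lt (d : Order.disp_t) (L : finTBDistrLatticeType d) (b a : L) :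
  b <= a -> b != a -> (#|[set z : L | (z <= b)%O]| < #|[set z : L | (z <= a)%O]|)%N.
Proof.
move=> ba nba; apply: proper_card; apply/properP; split.
  by apply/subsetP => z; rewrite !inE => zb; apply: le_trans zb ba.
exists a; rewrite !inE ?lexx //; apply/negP => ab.
by move: nba; rewrite (@le_anti _ _ b a) ?ba ?ab ?eqxx.
Qed.

Theorem mainTheorem18 (dL dT : Order.disp_t)
  (L : finTBDistrLatticeType dL) (T : finTBDistrLatticeType dT) (p : L -> T) :
  quotient_map_on (JI L) (JI T) p ->
  [set p x | x in JI L] = JI T ->
  quotient_map_on [set: L] [set: T] p /\ join_preserving p ->
  forall a : L, birkhoff (p a) = hat_map p (birkhoff a).
Proof.
move=> _ _ [[_ surj _ _] jp] a.
have mono := @mono_of_join _ _ _ _ p jp.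
have p0 : p \bot = \bot.
  have [x _ px] := surj \bot (in_setT _).
  by apply/eqP; rewrite -lex0 -px mono // le0x.
have key : forall y, join_irr y -> forall n (a : L), (#|[set z : L | (z <= a)%O]| <= n)%N ->
    y <= p a -> exists2 s, (s \in JI L) && (s <= a) & y <= p s.
  move=> y jy; elim=> [|n IH] a0 ca ya.
    by move: ca; rewrite leqn0 => /eqP/cards0_eq/setP/(_ a0); rewrite !inE lexx.
  case ja: (join_irr a0).
    by exists a0; rewrite // inE ja lexx.
  case: (eqVneq a0 \bot) => [a0b|a0nb].
    move: jy ya => /andP[ynb _]; rewrite a0b p0 lex0 => yb.
    by rewrite yb in ynb.
  move: ja; rewrite /join_irr a0nb /= => /negbT/forallPn[b /forallPn[c]].
  rewrite negb_imply negb_or => /andP[/eqP abc /andP[nab nac]].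
  have ba : b <= a0 by rewrite abc leUl.
  have cA : c <= a0 by rewrite abc leUr.
  move: ya; rewrite abc jp => /(@ji_prime _ _ _ _ _ jy)/orP[yb|yc].
    have [|s /andP[sJ sb] ys] := IH b _ yb.
      by rewrite -ltnS; apply: leq_trans (@card_lt _ _ b a0 ba _) ca; rewrite eq_sym.
    by exists s => //; rewrite sJ /= -abc; exact: le_trans sb ba.
  have [|s /andP[sJ sb] ys] := IH c _ yc.
    by rewrite -ltnS; apply: leq_trans (@card_lt _ _ c a0 cA _) ca; rewrite eq_sym.
  by exists s => //; rewrite sJ /= -abc; exact: le_trans sb cA.
apply/setP => y; rewrite /birkhoff /hat_map !inE.
case jy': (join_irr y) => //=.
apply/idP/existsP.
  move=> ypa.
  have [s /andP[sJ sa] ys] := key y jy' _ a (leqnn _) ypa.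
  set S := [set x in JI L | x <= a].
  have sS : s \in S by rewrite inE sJ sa.
  case: (@arg_maxnP _ s [pred z | (z \in S) && (s <= z)]
                      (fun z => #|[set w : L | w <= z]|)); first by rewrite /= sS lexx.
  move=> m /andP[mS sm] mmax.
  exists m; rewrite /maximal_in mS /= (le_trans ys (mono _ _ sm)) andbT.
  apply/forallP => b; apply/implyP => bS; apply/negP => mb.
  have := mmax b; rewrite /= bS (le_trans sm (ltW mb)) => /(_ isT).
  by rewrite leqNgt card_lt ?ltW // lt_eqF.
case=> s /andP[/andP[sS _] ys].
move: sS; rewrite inE => /andP[_ sa].
exact: le_trans ys (mono _ _ sa).
Qed.
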